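(* Let $n\ge 4$, let $\pi$ be a real representation of $S_n$, and let $s_1=(1,2)$, $s_3=(3,4)$. Then the integer $h_\pi=\frac{\chi_\pi(1)-\chi_\pi(s_1s_3)}{2}$ is even.
   Context: $\chi_\pi$ denotes the character of $\pi$. *)

(* Defs.v *)
From mathcomp Require Import all_boot all_order all_algebra all_fingroup.
From mathcomp Require Import mxrepresentation.
From mathcomp Require Import reals.
Set Implicit Arguments. Unset Strict Implicit. Unset Printing Implicit Defensive.
Import GRing.Theory Num.Theory.
Local Open Scope ring_scope.

Definition mx_char (R : comUnitRingType) (gT : finGroupType) (G : {group gT})
  (d : nat) (rG : mx_representation R G d) (g : gT) : R := \tr (rG g).

(* Main.v *)
Require Import Defs.
From mathcomp Require Import all_boot all_order all_algebra all_fingroup.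
From mathcomp Require Import mxrepresentation.
From mathcomp Require Import reals.
From mathcomp Require Import ring lra.
Import GRing.Theory Num.Theory.
Local Open Scope ring_scope.

Lemma idem_tr (F : fieldType) n (P : 'M[F]_n) : P *m P = P -> \tr P = (\rank P)%:R.
Proof.
move=> PP.
move: (mulmx_base P) (row_base_free P) (col_base_full P).
move: (col_base P) (row_base P) => C D eP fD fC.
have DC : D *m C = 1%:M.
  apply: (row_free_inj fD); apply: (row_full_inj fC).
  by rewrite mul1mx !mulmxA eP -mulmxA eP PP.
by rewrite -{1}eP mxtrace_mulC DC mxtrace1.
Qed.

Lemma alg_part (F : numFieldType) d (A B : 'M[F]_d) :
  A *m A = 1%:M -> B *m B = 1%:M -> A *m B = B *m A -> \tr A = \tr B ->
  \tr (1%:M : 'M[F]_d) - \tr (A *m B) =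
  4%:R * (\rank ((4%:R)^-1 *: ((1%:M + A) *m (1%:M - B))))%:R.
Proof.
move=> AA BB AB tAB.
set P1 := 1%:M + A; set Q := 1%:M - B.
have P1P1 : P1 *m P1 = 2%:R *: P1.
  by rewrite scaler_nat mulr2n {1}/P1 mulmxDl mul1mx mulmxDr mulmx1 AA (addrC A).
have QQ : Q *m Q = 2%:R *: Q.
  by rewrite scaler_nat mulr2n {1}/Q mulmxBl mul1mx mulmxBr mulmx1 BB opprB addrC addrA.
have QP : Q *m P1 = P1 *m Q.
  rewrite /P1 /Q !(mulmxDl, mulmxDr, mulmxBl, mulmxBr, mul1mx, mulmx1).
  by rewrite mulmxN mulNmx AB addrACA.
have MM : (P1 *m Q) *m (P1 *m Q) = (2%:R * 2%:R) *: (P1 *m Q).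
  rewrite -mulmxA (mulmxA Q) QP !mulmxA P1P1 -mulmxA QQ.
  by rewrite -scalemxAl -scalemxAr scalerA.
have PP : ((4%:R)^-1 *: (P1 *m Q)) *m ((4%:R)^-1 *: (P1 *m Q)) =
          (4%:R)^-1 *: (P1 *m Q).
  rewrite -scalemxAl -scalemxAr MM !scalerA; congr (_ *: _).
  have h4 : (4%:R : F) != 0 by rewrite pnatr_eq0.
  by field.
rewrite -(@idem_tr _ _ _ PP) mxtraceZ mulrA divff ?mul1r; last by rewrite pnatr_eq0.
by rewrite /P1 /Q mulmxBr mulmx1 mulmxDl mul1mx raddfB /= !mxtraceD tAB; ring.
Qed.

Theorem lemma3p2 (R : realType) (n : nat) (hn : (4 <= n)%N)
  (i1 i2 i3 i4 : 'I_n)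
  (h1 : nat_of_ord i1 = 0%N) (h2 : nat_of_ord i2 = 1%N)
  (h3 : nat_of_ord i3 = 2%N) (h4 : nat_of_ord i4 = 3%N)
  (d : nat) (pi : mx_representation R [set: 'S_n]%G d) :
  let s1 : 'S_n := tperm i1 i2 in
  let s3 : 'S_n := tperm i3 i4 in
  exists k : int,
    (mx_char pi 1%g - mx_char pi (s1 * s3)%g) / 2%:R = (2 * k)%:~R.
Proof.
move=> s1 s3.
have inT (x : 'S_n) : x \in [set: 'S_n]%G by rewrite inE.
have pM (x y : 'S_n) : pi (x * y)%g = pi x *m pi y by rewrite repr_mxM ?inT.
have ne (a b : 'I_n) : nat_of_ord a <> nat_of_ord b -> a != b.
  by move=> H; apply/eqP => E; apply: H; rewrite E.
have n12 : i1 != i2 by apply: ne; rewrite h1 h2.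
have n13 : i1 != i3 by apply: ne; rewrite h1 h3.
have n14 : i1 != i4 by apply: ne; rewrite h1 h4.
have n23 : i2 != i3 by apply: ne; rewrite h2 h3.
have n24 : i2 != i4 by apply: ne; rewrite h2 h4.
have n34 : i3 != i4 by apply: ne; rewrite h3 h4.
have comm : (s1 * s3 = s3 * s1)%g.
  apply/permP => x; rewrite !permM /s1 /s3.
  have n21 : i2 != i1 by rewrite eq_sym.
  have n31 : i3 != i1 by rewrite eq_sym.
  have n41 : i4 != i1 by rewrite eq_sym.
  have n32 : i3 != i2 by rewrite eq_sym.
  have n42 : i4 != i2 by rewrite eq_sym.
  have n43 : i4 != i3 by rewrite eq_sym.
  case: (tpermP i1 i2 x) => [->|->|/eqP x1 /eqP x2].
  - by rewrite (tpermD n31 n41) (tpermD n32 n42) tpermL.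
  - by rewrite (tpermD n31 n41) (tpermD n32 n42) tpermR.
  case: (tpermP i3 i4 x) => [_|_|_ _].
  - by rewrite (tpermD n14 n24).
  - by rewrite (tpermD n13 n23).
  by rewrite tpermD // eq_sym.
have AA : pi s1 *m pi s1 = 1%:M by rewrite -pM tperm2 repr_mx1.
have BB : pi s3 *m pi s3 = 1%:M by rewrite -pM tperm2 repr_mx1.
have AB : pi s1 *m pi s3 = pi s3 *m pi s1 by rewrite -!pM comm.
pose w : 'S_n := (tperm i1 i3 * tperm i2 i4)%g.
have s3J : s3 = (w^-1 * s1 * w)%g.
  have n32 : i3 != i2 by rewrite eq_sym.
  have n43 : i4 != i3 by rewrite eq_sym.
  by rewrite -mulgA -conjgE /s1 tpermJ !permM tpermL (tpermD n12 n32) (tpermD n23 n43) tpermL.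
have tAB : \tr (pi s1) = \tr (pi s3).
  by rewrite s3J (pM (w^-1 * s1)%g) (pM (w^-1)%g) mxtrace_mulC mulmxA -(pM w) mulgV repr_mx1 mul1mx.
have := @alg_part _ _ _ _ AA BB AB tAB.
set r := \rank _ => hr.
exists (r%:Z).
have -> : ((2 * r%:Z)%:~R : R) = 2%:R * r%:R by rewrite intrM.
rewrite /mx_char pM (repr_mx1 pi) hr.
by field.
Qed.
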